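(* Consider an arbitrary sequence of instances $\{\mathcal{I}_N\}$ of the binary voting game and an arbitrary sequence of strategy profiles $\{\Sigma_N\}_{N\ge1}$ ($\Sigma_N$ a profile in $\mathcal{I}_N$), and let $f^N$ be the excess expected vote share of $\Sigma_N$. (i) If $\liminf_{N\to\infty}\sqrt N f^N=+\infty$, then $\lim_{N\to\infty}A(\Sigma_N)=1$. (ii) If $\liminf_{N\to\infty}\sqrt N f^N<0$ (including $-\infty$), then $A(\Sigma_N)$ does not converge to $1$. (iii) If $0\le\liminf_{N\to\infty}\sqrt N f^N<+\infty$ and there is a constant $\psi>0$ such that $\mathrm{Var}\big(\sum_{n=1}^N X_n^N\mid W=w\big)\ge\psi N$ for every $N$ and every state $w\in\{L,H\}$, then $A(\Sigma_N)$ does not converge to $1$.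
   Context: Binary voting game. An instance has $N$ agents each voting for $\mathbf{A}$ or $\mathbf{R}$. Unobserved world state $W\in\{L,H\}$ with common prior $P_L,P_H>0$. Conditional on $W$, each agent independently receives a signal $S_n\in\{l,h\}$ with $P_{sw}=\Pr[S_n=s\mid W=w]$, $P_{hH}>P_{hL}$, $P_{lH}<P_{lL}$. With threshold $\mu\in(0,1)$, $\mathbf{A}$ wins iff at least $\mu N$ agents vote $\mathbf{A}$, else $\mathbf{R}$ wins. Agent $n$ has utility $v_n:\{L,H\}\times\{\mathbf{A},\mathbf{R}\}\to\{0,\dots,B\}$ with $v_n(H,\mathbf{A})>v_n(L,\mathbf{A})$, $v_n(H,\mathbf{R})<v_n(L,\mathbf{R})$; agents are friendly, unfriendly or contingent, with counts $\lfloor\alpha_F N\rfloor$, $\lfloor\alpha_U N\rfloor$ and the rest, for fixed $\alpha_F,\alpha_U,\alpha_C\ge0$ summing to 1, $\alpha_F<\mu$, $\alpha_U<1-\mu$; the informed majority decision is $\mathbf{A}$ in $H$ and $\mathbf{R}$ in $L$. A sequence of instances $\{\mathcal{I}_N\}$: $\mathcal{I}_N$ has $N$ agents; all share $\mu$, prior, signal distribution, $\alpha$'s; utilities arbitrary. Strategy $\sigma=(\beta_l,\beta_h)$, $\beta_s$ = probability of voting $\mathbf{A}$ on signal $s$; profile $\Sigma=(\sigma_1,\dots,\sigma_N)$. Fidelity $A(\Sigma)=P_L\lambda^{\mathbf{R}}_L(\Sigma)+P_H\lambda^{\mathbf{A}}_H(\Sigma)$, where $\lambda^{\mathbf{X}}_w(\Sigma)$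 is the ex-ante probability that $\mathbf{X}$ wins in state $w$. For the profile $\Sigma_N$, let $X_n^N=1$ if agent $n$ votes $\mathbf{A}$ and $0$ otherwise. Excess expected vote share: $f^N_H=\frac1N\sum_{n=1}^N E[X_n^N\mid W=H]-\mu$, $f^N_L=\frac1N\sum_{n=1}^N E[1-X_n^N\mid W=L]-(1-\mu)$, and $f^N=\min(f^N_H,f^N_L)$. *)

(* Defs.v *)
From HB Require Import structures.
From mathcomp Require Import all_boot all_order all_algebra.
From mathcomp Require Import all_classical all_reals all_analysis.
Set Implicit Arguments. Unset Strict Implicit. Unset Printing Implicit Defensive.
Import Order.TTheory GRing.Theory Num.Theory.
Local Open Scope ring_scope.

Inductive state := L | H.

Section Game.
Variable R : realType.

(* Signal distribution: signal [true] = h, [false] = l.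
   PhL = P_{hL}, PhH = P_{hH}; P_{lw} = 1 - P_{hw}. *)
Definition psig (PhL PhH : R) (w : state) (s : bool) : R :=
  let p := if w is H then PhH else PhL in if s then p else 1 - p.

(* A strategy is the pair (beta_l, beta_h) of probabilities of voting A
   on signal l resp. h.  A profile for N agents assigns one to each agent. *)
Definition strategy := (R * R)%type.
Definition valid_strategy (sg : strategy) : Prop :=
  0 <= sg.1 <= 1 /\ 0 <= sg.2 <= 1.

(* probability that an agent with strategy sg and signal s casts vote x
   (x = true means a vote for A). *)
Definition pvote (sg : strategy) (s : bool) (x : bool) : R :=
  let b := if s then sg.2 else sg.1 in if x then b else 1 - b.

Definition jprob (PhL PhH : R) (w : state) N (Sig : 'I_N -> strategy)
  (s x : {ffun 'I_N -> bool}) : R :=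
  \prod_(n < N) (psig PhL PhH w (s n) * pvote (Sig n) (s n) (x n)).

Definition condE (PhL PhH : R) (w : state) N (Sig : 'I_N -> strategy)
  (F : {ffun 'I_N -> bool} -> R) : R :=
  \sum_(s : {ffun 'I_N -> bool}) \sum_(x : {ffun 'I_N -> bool})
     jprob PhL PhH w Sig s x * F x.

Definition nA N (x : {ffun 'I_N -> bool}) : R := (#|[set n | x n]|)%:R.
Definition Xn N (n : 'I_N) (x : {ffun 'I_N -> bool}) : R := (x n)%:R.

Definition Awins (mu : R) N (x : {ffun 'I_N -> bool}) : bool :=
  mu * N%:R <= nA x.

Definition lambdaA mu PhL PhH w N (Sig : 'I_N -> strategy) : R :=
  condE PhL PhH w Sig (fun x => if Awins mu x then 1 else 0).
Definition lambdaR mu PhL PhH w N (Sig : 'I_N -> strategy) : R :=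
  condE PhL PhH w Sig (fun x => if Awins mu x then 0 else 1).

Definition fidelity mu PL PH PhL PhH N (Sig : 'I_N -> strategy) : R :=
  PL * lambdaR mu PhL PhH L Sig + PH * lambdaA mu PhL PhH H Sig.

Definition fH mu PhL PhH N (Sig : 'I_N -> strategy) : R :=
  N%:R^-1 * (\sum_(n < N) condE PhL PhH H Sig (Xn n)) - mu.
Definition fL mu PhL PhH N (Sig : 'I_N -> strategy) : R :=
  N%:R^-1 * (\sum_(n < N) condE PhL PhH L Sig (fun x => 1 - Xn n x)) - (1 - mu).
Definition fexcess mu PhL PhH N (Sig : 'I_N -> strategy) : R :=
  Num.min (fH mu PhL PhH Sig) (fL mu PhL PhH Sig).

Definition condVar PhL PhH w N (Sig : 'I_N -> strategy) : R :=
  condE PhL PhH w Sig (fun x => nA x ^+ 2) - (condE PhL PhH w Sig (@nA N)) ^+ 2.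

End Game.

(* Main.v *)
Require Import Defs.
From HB Require Import structures.
From mathcomp Require Import all_boot all_order all_algebra.
From mathcomp Require Import all_classical all_reals all_analysis.
From mathcomp Require Import ring lra.
Import Order.TTheory GRing.Theory Num.Theory.
Set Implicit Arguments. Unset Strict Implicit. Unset Printing Implicit Defensive.
Local Open Scope ring_scope.

Section FinE.
Variable R : realType.
Variable T : finType.
Variable w : T -> R.
Hypothesis w0 : forall t, 0 <= w t.
Hypothesis w1 : \sum_t w t = 1.

Definition Ex (F : T -> R) := \sum_t w t * F t.
Definition ind (b : bool) : R := if b then 1 else 0.

Lemma eq_Ex F G : F =1 G -> Ex F = Ex G.
Proof. by move=> e; apply: eq_bigr => t _; rewrite e. Qed.

Lemma Ex_cst c : Ex (fun _ => c) = c.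
Proof. by rewrite /Ex -big_distrl /= w1 mul1r. Qed.

Lemma ExD F G : Ex (fun t => F t + G t) = Ex F + Ex G.
Proof. by rewrite /Ex -big_split; apply: eq_bigr => t _; rewrite mulrDr. Qed.

Lemma ExZ c F : Ex (fun t => c * F t) = c * Ex F.
Proof. by rewrite /Ex big_distrr; apply: eq_bigr => t _; rewrite mulrCA. Qed.

Lemma ExN F : Ex (fun t => - F t) = - Ex F.
Proof. by rewrite -mulN1r -ExZ; apply: eq_Ex => t; rewrite mulN1r. Qed.

Lemma ExB F G : Ex (fun t => F t - G t) = Ex F - Ex G.
Proof. by rewrite ExD ExN. Qed.

Lemma Ex_sum (I : finType) (F : I -> T -> R) :
  Ex (fun t => \sum_i F i t) = \sum_i Ex (F i).
Proof.
rewrite /Ex (exchange_big) /=; apply: eq_bigr => t _.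
by rewrite big_distrr.
Qed.

Lemma Ex_ge0 F : (forall t, 0 <= F t) -> 0 <= Ex F.
Proof. by move=> h; apply: sumr_ge0 => t _; apply: mulr_ge0. Qed.

Lemma Ex_le F G : (forall t, F t <= G t) -> Ex F <= Ex G.
Proof. by move=> h; apply: ler_sum => t _; apply: ler_wpM2l. Qed.

Lemma ind_ge0 b : 0 <= ind b. Proof. by case: b. Qed.
Lemma ind_le1 b : ind b <= 1. Proof. by case: b. Qed.
Lemma ind_sqr b : ind b ^+ 2 = ind b. Proof. by case: b; rewrite ?expr1n ?expr0n. Qed.
Lemma indN b : ind (~~ b) = 1 - ind b. Proof. by case: b; rewrite /= ?subrr ?subr0. Qed.

Lemma Ex_CS F G : Ex (fun t => F t * G t) ^+ 2 <= Ex (fun t => F t ^+ 2) * Ex (fun t => G t ^+ 2).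
Proof.
have key : 0 <= \sum_s \sum_t w s * w t * (F s * G t - F t * G s) ^+ 2.
  by apply: sumr_ge0 => s _; apply: sumr_ge0 => t _; apply: mulr_ge0;
     [apply: mulr_ge0 | apply: sqr_ge0].
have e : \sum_s \sum_t w s * w t * (F s * G t - F t * G s) ^+ 2 =
  2 * (Ex (fun t => F t ^+ 2) * Ex (fun t => G t ^+ 2) - Ex (fun t => F t * G t) ^+ 2).
  have eA : Ex (fun t => F t ^+ 2) * Ex (fun t => G t ^+ 2) =
     \sum_s \sum_t (w s * F s ^+ 2) * (w t * G t ^+ 2).
    by rewrite /Ex big_distrl /=; apply: eq_bigr => s _; rewrite big_distrr.
  have eA' : Ex (fun t => F t ^+ 2) * Ex (fun t => G t ^+ 2) =
     \sum_s \sum_t (w t * F t ^+ 2) * (w s * G s ^+ 2).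
    by rewrite eA exchange_big.
  have eB : Ex (fun t => F t * G t) ^+ 2 =
     \sum_s \sum_t (w s * (F s * G s)) * (w t * (F t * G t)).
    by rewrite expr2 /Ex big_distrl /=; apply: eq_bigr => s _; rewrite big_distrr.
  have -> : 2 * (Ex (fun t => F t ^+ 2) * Ex (fun t => G t ^+ 2) - Ex (fun t => F t * G t) ^+ 2)
    = (Ex (fun t => F t ^+ 2) * Ex (fun t => G t ^+ 2) + Ex (fun t => F t ^+ 2) * Ex (fun t => G t ^+ 2)) - 2 * Ex (fun t => F t * G t) ^+ 2 by ring.
  rewrite {1}eA eA' eB -big_split big_distrr -sumrB /=; apply: eq_bigr => s _.
  rewrite -big_split big_distrr -sumrB /=; apply: eq_bigr => t _.
  ring.
have := key; rewrite e pmulr_rge0 ?subr_ge0 //; lra.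
Qed.


Lemma Ex_indC (P : T -> bool) : Ex (fun t => ind (~~ P t)) = 1 - Ex (fun t => ind (P t)).
Proof. by rewrite -(Ex_cst 1) -ExB; apply: eq_Ex => t; rewrite indN. Qed.

Lemma Ex_ind_ge0 (P : T -> bool) : 0 <= Ex (fun t => ind (P t)).
Proof. by apply: Ex_ge0 => t; apply: ind_ge0. Qed.

Lemma Ex_ind_le1 (P : T -> bool) : Ex (fun t => ind (P t)) <= 1.
Proof. by rewrite -[X in _ <= X](Ex_cst 1); apply: Ex_le => t; apply: ind_le1. Qed.

Definition Zm (Z : T -> R) t := (`|Z t| - Z t) / 2.

Lemma Zm_ge0 Z t : 0 <= Zm Z t.
Proof. rewrite /Zm; have := ler_norm (Z t); lra. Qed.

Lemma Zm_sqr Z t : Zm Z t ^+ 2 <= Z t ^+ 2.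
Proof.
rewrite /Zm; case: (lerP 0 (Z t)) => h.
  rewrite ger0_norm // subrr mul0r expr0n /=; exact: sqr_ge0.
rewrite ltr0_norm //; rewrite -sqrrN le_eqVlt; apply/orP; left; apply/eqP; congr (_ ^+ 2); lra.
Qed.

Lemma ExZm Z : Ex Z = 0 -> Ex (Zm Z) = Ex (fun t => `|Z t|) / 2.
Proof.
move=> h; rewrite /Zm (eq_Ex (G := fun t => (1/2) * `|Z t| - (1/2) * Z t)); last first.
  by move=> t; ring.
by rewrite ExB !ExZ h mulr0 subr0 mulrC mul1r.
Qed.

Lemma Ex_sqr_ind Z (P : T -> bool) :
  Ex (fun t => Z t * ind (P t)) ^+ 2 <= Ex (fun t => Z t ^+ 2) * Ex (fun t => ind (P t)).
Proof.
apply: le_trans (Ex_CS _ _) _.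
by rewrite (eq_Ex (F := fun t => ind (P t) ^+ 2) (G := fun t => ind (P t))) // => t; rewrite ind_sqr.
Qed.

Lemma tail1 (Z : T -> R) V x : Ex Z = 0 -> Ex (fun t => Z t ^+ 2) <= V -> 0 < x ->
  x ^+ 2 * (1 - Ex (fun t => ind (Z t < x))) ^+ 2 <= V * Ex (fun t => ind (Z t < x)).
Proof.
move=> hE hV hx; set p := Ex _.
have p0 : 0 <= p by apply: Ex_ind_ge0.
have p1 : p <= 1 by apply: Ex_ind_le1.
have e1 : 1 - p = Ex (fun t => ind (x <= Z t)).
  by rewrite /p -Ex_indC; apply: eq_Ex => t; rewrite -leNgt.
have hp : x * (1 - p) <= Ex (fun t => (`|Z t| + Z t) / 2).
  rewrite e1 -ExZ; apply: Ex_le => t; case: (lerP x (Z t)) => h /=.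
    rewrite /ind mulr1 ger0_norm; [lra | lra].
  rewrite /ind mulr0; have := ler_norm (- Z t); rewrite normrN; lra.
have eq : Ex (fun t => (`|Z t| + Z t) / 2) = Ex (Zm Z).
  rewrite (ExZm hE) (eq_Ex (G := fun t => (1/2) * `|Z t| + (1/2) * Z t)); last first.
    by move=> t; ring.
  by rewrite ExD !ExZ hE mulr0 addr0 mulrC mul1r.
have hm : Ex (Zm Z) = Ex (fun t => Zm Z t * ind (Z t < x)).
  apply: eq_Ex => t; case: (ltrP (Z t) x) => h /=; first by rewrite /ind mulr1.
  rewrite /ind mulr0 /Zm ger0_norm ?subrr ?mul0r //; lra.
have hsq : Ex (Zm Z) ^+ 2 <= V * p.
  rewrite hm; apply: le_trans (Ex_sqr_ind _ _) _.
  apply: ler_wpM2r => //; apply: le_trans hV; apply: Ex_le => t; exact: Zm_sqr.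
have x1 : 0 <= x * (1 - p) by apply: mulr_ge0; lra.
rewrite -exprMn; apply: le_trans hsq; rewrite -eq.
by apply: lerXn2r => //; rewrite nnegrE //; apply: le_trans hp.
Qed.


Lemma tail2 (Z : T -> R) V y : Ex Z = 0 -> Ex (fun t => Z t ^+ 2) = V ->
  Ex (fun t => Z t ^+ 4) <= 4 * V ^+ 2 -> 0 < V -> 0 <= y -> 256 * y ^+ 2 <= V ->
  1 / 256 <= Ex (fun t => ind (Z t < - y)).
Proof.
move=> hE hV h4 V0 y0 hy; set p := Ex _.
have p0 : 0 <= p by apply: Ex_ind_ge0.
set s := Num.sqrt V.
have s0 : 0 < s by rewrite sqrtr_gt0.
have ss : s ^+ 2 = V by rewrite sqr_sqrtr // ltW.
have pw : forall t, Z t ^+ 2 <= 2 * s * `|Z t| + (1 / (8 * V)) * Z t ^+ 4.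
  move=> t; set z := `|Z t|.
  have z0 : 0 <= z by apply: normr_ge0.
  have -> : Z t ^+ 2 = z ^+ 2 by rewrite /z real_normK // num_real.
  have -> : Z t ^+ 4 = z ^+ 4.
    by rewrite -[4%N]/(2 * 2)%N !exprM /z real_normK // num_real.
  rewrite -ss.
  have key : 0 <= z * ((z - 2 * s) ^+ 2 * (z + 4 * s) + 4 * s ^+ 2 * z).
    apply: mulr_ge0 => //; apply: addr_ge0; last by apply: mulr_ge0; [apply: mulr_ge0; [lra|apply: sqr_ge0]|].
    by apply: mulr_ge0; [apply: sqr_ge0 | lra].
  have s2 : 0 < 8 * s ^+ 2 by apply: mulr_gt0; [lra | apply: exprn_gt0].
  rewrite -subr_ge0.
  have -> : 2 * s * z + 1 / (8 * s ^+ 2) * z ^+ 4 - z ^+ 2 =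
     (z * ((z - 2 * s) ^+ 2 * (z + 4 * s) + 4 * s ^+ 2 * z)) / (8 * s ^+ 2).
    by field; rewrite gt_eqF.
  by apply: divr_ge0 => //; apply: ltW.
have hEa : V <= 2 * s * Ex (fun t => `|Z t|) + V / 2.
  rewrite -{1}hV; apply: le_trans (Ex_le pw) _.
  rewrite ExD !ExZ lerD2l.
  have -> : V / 2 = 1 / (8 * V) * (4 * V ^+ 2) by field; rewrite gt_eqF.
  apply: ler_wpM2l => //; apply: divr_ge0; lra.
have ea : Ex (fun t => `|Z t|) >= s / 4.
  have : s ^+ 2 <= 4 * s * Ex (fun t => `|Z t|) by rewrite ss; lra.
  rewrite expr2 -mulrA [4 * _]mulrC -mulrA ler_pM2l // => h.
  rewrite ler_pdivrMr; lra.
have em : s / 8 <= Ex (Zm Z) by rewrite (ExZm hE); lra.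
have ys : 16 * y <= s.
  rewrite -(ler_pXn2r (n := 2)) ?nnegrE //; [|lra|exact: ltW].
  by rewrite ss exprMn; apply: le_trans hy; rewrite expr2; lra.
have hi : Ex (Zm Z) - y <= Ex (fun t => Zm Z t * ind (Z t < - y)).
  have -> : Ex (Zm Z) - y = Ex (fun t => Zm Z t - y) by rewrite ExB Ex_cst.
  apply: Ex_le => t; rewrite /ind.
  case: (ltrP (Z t) (- y)) => h.
    by rewrite mulr1; lra.
  rewrite mulr0 /Zm; case: (lerP 0 (Z t)) => h2.
    by rewrite ger0_norm //; lra.
  by rewrite ltr0_norm //; lra.
have hsq := Ex_sqr_ind (Zm Z) (fun t => Z t < - y).
have hz2 : Ex (fun t => Zm Z t ^+ 2) <= V by rewrite -hV; apply: Ex_le => t; apply: Zm_sqr.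
have : (s / 16) ^+ 2 <= V * p.
  have h1 : (s / 16) ^+ 2 <= Ex (fun t => Zm Z t * ind (Z t < - y)) ^+ 2.
    apply: lerXn2r; rewrite ?nnegrE; lra.
  exact: (le_trans h1 (le_trans hsq (ler_wpM2r p0 hz2))).
rewrite exprMn ss => h.
have : V * (1 / 256) <= V * p.
  apply: le_trans h; rewrite expr2 -[V * (1 / 256)]mulr1 mulrC; lra.
by rewrite ler_pM2l.
Qed.

End FinE.


Section Prod.
Variable R : realType.
Variable N : nat.
Variable q : 'I_N -> R.
Hypothesis q01 : forall n, 0 <= q n <= 1.

Definition bw n (b : bool) := if b then q n else 1 - q n.
Definition pw (x : {ffun 'I_N -> bool}) := \prod_n bw n (x n).
Notation E := (Ex pw).

Lemma pw0 x : 0 <= pw x.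
Proof. apply: prodr_ge0 => n _; rewrite /bw; case: (x n); have := q01 n; lra. Qed.

Lemma prodE (g : 'I_N -> bool -> R) :
  E (fun x => \prod_n g n (x n)) = \prod_n (q n * g n true + (1 - q n) * g n false).
Proof.
rewrite /Ex /=.
have e x : pw x * \prod_n g n (x n) = \prod_n (bw n (x n) * g n (x n)) by rewrite big_split.
under eq_bigr do rewrite e.
rewrite -(bigA_distr_bigA (fun n b => bw n b * g n b)) /=.
by apply: eq_bigr => n _; rewrite big_bool.
Qed.

Lemma pw1 : \sum_x pw x = 1.
Proof.
have := prodE (fun _ _ => 1); rewrite /Ex /=.
rewrite (eq_bigr (fun x => pw x)); last by move=> x _; rewrite big1 // mulr1.
move=> ->; apply: big1 => n _; ring.
Qed.

Definition dep (A : {set 'I_N}) (F : {ffun 'I_N -> bool} -> R) :=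
  forall x y : {ffun 'I_N -> bool}, (forall n, n \in A -> x n = y n) -> F x = F y.

Lemma dep_sub (A B : {set 'I_N}) F : A \subset B -> dep A F -> dep B F.
Proof. by move=> /fintype.subsetP AB h x y e; apply: h => n nA; apply: e; apply: AB. Qed.

Definition indA (A : {set 'I_N}) (y x : {ffun 'I_N -> bool}) : R :=
  \prod_n (if n \in A then ind R (x n == y n) else 1).
Definition fixA (A : {set 'I_N}) (y : {ffun 'I_N -> bool}) :=
  [forall n, (n \notin A) ==> ~~ y n].
Definition cF A F y : R := if fixA A y then F y else 0.

Lemma decomp (A : {set 'I_N}) F : dep A F -> forall x, F x = \sum_y cF A F y * indA A y x.
Proof.
move=> dF x; set y0 : {ffun 'I_N -> bool} := [ffun n => (n \in A) && x n].
have fy0 : fixA A y0.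
  by apply/forallP => n; apply/implyP => nA; rewrite ffunE (negbTE nA).
rewrite (bigD1 y0) //= big1 ?addr0.
  rewrite /cF fy0 /indA big1 ?mulr1.
    by apply: dF => n nA; rewrite ffunE nA.
  by move=> n _; case: ifP => // nA; rewrite ffunE nA /= eqxx.
move=> y ny; rewrite /cF; case: ifP => fy; last by rewrite mul0r.
have [n hn] : exists n, y n != y0 n.
  apply/existsP; move: ny; apply: contraR; rewrite negb_exists => /forallP h.
  by apply/eqP/ffunP => n; move: (h n); rewrite negbK => /eqP.
have nA : n \in A.
  apply: contraR hn => nA; move/forallP: fy => /(_ n) /implyP /(_ nA) /negbTE ->.
  by rewrite ffunE (negbTE nA).
rewrite /indA (bigD1 n) //= nA.
move: hn; rewrite ffunE nA /= eq_sym => /negbTE ->.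
by rewrite /ind mul0r mulr0.
Qed.

Lemma Ex_ind_mul (A : {set 'I_N}) y z :
  E (fun x => indA A y x * indA (~: A) z x) = E (indA A y) * E (indA (~: A) z).
Proof.
rewrite /indA.
have e (x : {ffun 'I_N -> bool}) : (\prod_n (if n \in A then ind R (x n == y n) else 1)) *
     (\prod_n (if n \in ~: A then ind R (x n == z n) else 1)) =
     \prod_n ((if n \in A then ind R (x n == y n) else 1) *
     (if n \in ~: A then ind R (x n == z n) else 1)) by rewrite big_split.
rewrite (eq_Ex _ e).
rewrite (prodE (fun n b => (if n \in A then ind R (b == y n) else 1) *
     (if n \in ~: A then ind R (b == z n) else 1))).
rewrite (prodE (fun n b => (if n \in A then ind R (b == y n) else 1))).
rewrite (prodE (fun n b => (if n \in ~: A then ind R (b == z n) else 1))).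
rewrite -big_split /=; apply: eq_bigr => n _; rewrite finset.in_setC.
by case: (n \in A) => /=; ring.
Qed.

Lemma indep (A : {set 'I_N}) F G : dep A F -> dep (~: A) G ->
  E (fun x => F x * G x) = E F * E G.
Proof.
move=> dF dG.
have eF := decomp dF; have eG := decomp dG.
have -> : E F = \sum_y cF A F y * E (indA A y).
  by rewrite (eq_Ex _ eF) Ex_sum //; apply: eq_bigr => y _; rewrite ExZ.
have -> : E G = \sum_z cF (~: A) G z * E (indA (~: A) z).
  by rewrite (eq_Ex _ eG) Ex_sum //; apply: eq_bigr => y _; rewrite ExZ.
rewrite (@eq_Ex _ _ _ _ (fun x => \sum_y \sum_z (cF A F y * cF (~: A) G z) *
    (indA A y x * indA (~: A) z x))); last first.
  move=> x; rewrite eF eG big_distrl /=; apply: eq_bigr => y _.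
  rewrite big_distrr /=; apply: eq_bigr => z _; ring.
rewrite Ex_sum big_distrl /=; apply: eq_bigr => y _.
rewrite Ex_sum big_distrr /=; apply: eq_bigr => z _.
by rewrite ExZ Ex_ind_mul; ring.
Qed.

End Prod.


Section Mom.
Variable R : realType.
Variable N : nat.
Variable q : 'I_N -> R.
Hypothesis q01 : forall n, 0 <= q n <= 1.
Notation E := (Ex (pw q)).
Local Notation FT := {ffun 'I_N -> bool}.

Definition dv n (x : {ffun 'I_N -> bool}) : R := ind R (x n) - q n.
Definition vv n : R := q n * (1 - q n).

Lemma Ex1 (n : 'I_N) (h : bool -> R) : E (fun x => h (x n)) = q n * h true + (1 - q n) * h false.
Proof.
have := prodE q (fun m b => if m == n then h b else 1).
rewrite (eq_Ex _ (G := fun x : FT => h (x n))); last first.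
  by move=> x; rewrite (bigD1 n) //= eqxx big1 ?mulr1 // => m /negbTE ->.
move=> ->; rewrite (bigD1 n) //= eqxx big1 ?mulr1 // => m /negbTE ->; ring.
Qed.

Lemma dep1 (n : 'I_N) (h : bool -> R) : dep [set n] (fun x => h (x n)).
Proof. by move=> x y e; rewrite e // set11. Qed.

Lemma dep_pow (A : {set 'I_N}) (F : FT -> R) k : dep A F -> dep A (fun x => F x ^+ k).
Proof. by move=> h x y e; rewrite (h x y e). Qed.

Lemma dep_sumA (A : {set 'I_N}) (s : seq 'I_N) (F : 'I_N -> {ffun 'I_N -> bool} -> R) :
  (forall n, n \in s -> n \in A) -> (forall n, dep [set n] (F n)) ->
  dep A (fun x => \sum_(n <- s) F n x).
Proof.
move=> sA hF x y e; apply: eq_big_seq => n ns; apply: hF => m; rewrite inE => /eqP ->.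
by apply: e; apply: sA.
Qed.

Lemma dep_dv (n : 'I_N) : dep [set n] (dv n).
Proof. by move=> x y e; rewrite /dv e // set11. Qed.

Lemma Edv (n : 'I_N) : E (dv n) = 0.
Proof. by rewrite (Ex1 n (fun b => ind R b - q n)) /ind; ring. Qed.
Lemma Edv2 (n : 'I_N) : E (fun x => dv n x ^+ 2) = vv n.
Proof. by rewrite (Ex1 n (fun b => (ind R b - q n) ^+ 2)) /ind /vv; ring. Qed.
Lemma Edv4 (n : 'I_N) : E (fun x => dv n x ^+ 4) <= vv n.
Proof.
rewrite (Ex1 n (fun b => (ind R b - q n) ^+ 4)) /ind /vv.
have /andP [h0 h1] := q01 n.
set a := q n in h0 h1 *.
have e : a * (1 - a) ^+ 4 + (1 - a) * (0 - a) ^+ 4 = a * (1 - a) * ((1 - a) ^+ 3 + a ^+ 3) by ring.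
rewrite e.
have p0 : 0 <= a * (1 - a) by apply: mulr_ge0; lra.
have : (1 - a) ^+ 3 + a ^+ 3 = 1 - 3 * (a * (1 - a)) by ring.
move=> ->; set b := a * (1 - a) in p0 *.
have -> : b * (1 - 3 * b) = b - 3 * (b * b) by ring.
have : 0 <= b * b by apply: mulr_ge0.
lra.
Qed.

Lemma vv_ge0 (n : 'I_N) : 0 <= vv n.
Proof. have /andP [h0 h1] := q01 n. apply: mulr_ge0; lra. Qed.
Lemma vv_le (n : 'I_N) : vv n <= 1 / 4.
Proof.
rewrite /vv; have : 0 <= (q n - 1/2) ^+ 2 by apply: sqr_ge0.
have -> : (q n - 1/2) ^+ 2 = 1/4 - q n * (1 - q n) by field.
lra.
Qed.

Lemma moments (s : seq 'I_N) : uniq s ->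
  let D := fun x => \sum_(n <- s) dv n x in
  let V := \sum_(n <- s) vv n in
  [/\ E D = 0, E (fun x => D x ^+ 2) = V & E (fun x => D x ^+ 4) <= 3 * V ^+ 2 + V].
Proof.
elim: s => [|a s IH] /=.
  rewrite big_nil.
  rewrite (eq_Ex _ (G := fun _ : FT => 0)); last by move=> x; rewrite big_nil.
  rewrite (eq_Ex _ (F := fun x : FT => (\sum_(n <- [::]) dv n x) ^+ 2) (G := fun _ : FT => 0)); last first.
    by move=> x; rewrite big_nil expr0n.
  rewrite (eq_Ex _ (F := fun x : FT => (\sum_(n <- [::]) dv n x) ^+ 4) (G := fun _ : FT => 0)); last first.
    by move=> x; rewrite big_nil expr0n.
  have w1 := pw1 q; rewrite !(Ex_cst w1); split => //; lra.
move=> /andP [as_ us]; have [h1 h2 h4] := IH us.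
set D := fun x => \sum_(n <- s) dv n x.
set V := \sum_(n <- s) vv n.
have dD : dep (~: [set a]) D.
  apply: dep_sumA => [n ns|n]; last by apply: dep_dv.
  by rewrite finset.in_setC inE; apply: contraNN as_ => /eqP <-.
have da : dep [set a] (dv a) by apply: dep_dv.
have ind2 : forall i j, E (fun x => dv a x ^+ i * D x ^+ j) =
    E (fun x => dv a x ^+ i) * E (fun x => D x ^+ j).
  move=> i j; apply: indep; [exact: (dep_pow _ da) | exact: (dep_pow _ dD)].
have w1 := pw1 q.
rewrite big_cons.
have eS : forall x, \sum_(n <- a :: s) dv n x = dv a x + D x by move=> x; rewrite big_cons.
have e1a : E (fun x => dv a x ^+ 1) = 0.
  by rewrite (eq_Ex _ (G := dv a)) ?Edv // => x; rewrite expr1.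
have e1D : E (fun x => D x ^+ 1) = 0.
  by rewrite (eq_Ex _ (G := D)) ?h1 // => x; rewrite expr1.
rewrite (eq_Ex _ eS) ExD h1 Edv addr0; split => //.
  rewrite (eq_Ex _ (G := fun x : FT => dv a x ^+ 2 + (2 * (dv a x ^+ 1 * D x ^+ 1) + D x ^+ 2)));
    last by move=> x; rewrite eS; ring.
  rewrite !ExD ExZ ind2 e1a e1D h2 Edv2; ring.
rewrite (eq_Ex _ (G := fun x : FT => dv a x ^+ 4 + (4 * (dv a x ^+ 3 * D x ^+ 1) +
   (6 * (dv a x ^+ 2 * D x ^+ 2) + (4 * (dv a x ^+ 1 * D x ^+ 3) + D x ^+ 4)))));
  last by move=> x; rewrite eS; ring.
rewrite !ExD !ExZ !ind2 Edv2 h2 e1a e1D !mulr0 !mul0r !mulr0 add0r.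
have := Edv4 a; have := vv_ge0 a; have : 0 <= V by apply: sumr_ge0 => n _; apply: vv_ge0.
move: h4; set E4 := E _; set e4 := E _ => h4 hV hv he.
have : 0 <= V * vv a by apply: mulr_ge0.
nra.
Qed.

End Mom.


Section Cum.
Variable R : realType.
Variable N : nat.
Variable q : 'I_N -> R.
Hypothesis q01 : forall n, 0 <= q n <= 1.

Definition vn (i : nat) : R := if (insub i : option 'I_N) is Some n then vv q n else 0.
Lemma vnE (n : 'I_N) : vn n = vv q n.
Proof. by rewrite /vn valK. Qed.
Lemma vn_ge0 i : 0 <= vn i.
Proof. rewrite /vn; case: insub => [n|] //; exact: vv_ge0. Qed.
Lemma vn_le i : vn i <= 1/4.
Proof. rewrite /vn; case: insub => [n|]; [exact: vv_le | lra]. Qed.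

Definition cumn k := \sum_(i < k) vn i.
Lemma cumnS k : cumn k.+1 = cumn k + vn k.
Proof. by rewrite /cumn big_ord_recr. Qed.
Lemma cumn0 : cumn 0 = 0. Proof. by rewrite /cumn big_ord0. Qed.
Lemma cumn_mono i k : (i <= k)%N -> cumn i <= cumn k.
Proof.
elim: k => [|k IH]; first by rewrite leqn0 => /eqP ->.
rewrite leq_eqVlt => /orP [/eqP -> //| ]; rewrite ltnS => /IH h.
rewrite cumnS; have := vn_ge0 k; lra.
Qed.
Lemma Vtot : \sum_n vv q n = cumn N.
Proof. by rewrite /cumn; apply: eq_bigr => n _; rewrite vnE. Qed.

Definition Tn k a := \sum_(i < k) (if cumn i < a then vn i else 0).
Lemma TnS k a : Tn k.+1 a = Tn k a + (if cumn k < a then vn k else 0).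
Proof. by rewrite /Tn big_ord_recr. Qed.

Lemma Tn_eq k a : cumn k < a -> Tn k a = cumn k.
Proof.
elim: k => [|k IH]; first by rewrite /Tn big_ord0 cumn0.
move=> h; have hk : cumn k < a by apply: le_lt_trans h; apply: cumn_mono.
by rewrite TnS IH // hk cumnS.
Qed.

Lemma Tn_up k a : 0 <= a -> Tn k a <= a + 1/4.
Proof.
move=> a0; elim: k => [|k IH]; first by rewrite /Tn big_ord0; lra.
rewrite TnS; case: ifP => h.
  by rewrite Tn_eq //; have := vn_le k; move: h; lra.
by rewrite addr0.
Qed.

Lemma Tn_low k a : a <= cumn k -> a <= Tn k a.
Proof.
elim: k => [|k IH]; first by rewrite cumn0 /Tn big_ord0.
move=> h; rewrite TnS; case: (ltrP (cumn k) a) => hk.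
  by rewrite Tn_eq // -cumnS.
by rewrite addr0; apply: IH.
Qed.


Variable M : nat.
Hypothesis M0 : (0 < M)%N.
Let V := cumn N.
Lemma V0 : 0 <= V.
Proof. by rewrite /V -cumn0; apply: cumn_mono. Qed.
Definition thr j : R := if (j < M)%N then j%:R * V / M%:R else V + 1.
Definition cum (n : 'I_N) := cumn n.
Definition Bj j := [set n : 'I_N | (thr j <= cum n) && (cum n < thr j.+1)].

Lemma Mpos : 0 < M%:R :> R. Proof. by rewrite ltr0n. Qed.

Lemma thr_le_V j : (j < M)%N -> thr j <= V.
Proof.
move=> jM; rewrite /thr jM ler_pdivrMr ?Mpos // mulrC ler_wpM2l ?V0 // ler_nat.
exact: ltnW.
Qed.

Lemma thr_ge0 j : 0 <= thr j.
Proof.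
rewrite /thr; case: ifP => _; last by have := V0; lra.
by apply: divr_ge0; [apply: mulr_ge0; [apply: ler0n | exact: V0] | apply: ler0n].
Qed.

Lemma thr_mono i k : (i <= k)%N -> (k <= M)%N -> thr i <= thr k.
Proof.
move=> ik kM; rewrite {2}/thr; case: ifP => kM'.
  rewrite /thr (leq_ltn_trans ik kM') ler_pM2r ?invr_gt0 ?Mpos //.
  by rewrite ler_wpM2r ?V0 // ler_nat.
case: (ltnP i M) => iM; first by have := thr_le_V iM; lra.
by rewrite /thr ltnNge iM.
Qed.

Lemma cum_ge0 n : 0 <= cum n.
Proof. by rewrite /cum -(cumn0); apply: cumn_mono. Qed.
Lemma cum_leV n : cum n <= V.
Proof. by rewrite /cum /V; apply: cumn_mono; apply: ltnW. Qed.

Lemma thr0 : thr 0 = 0.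
Proof. by rewrite /thr M0 mul0r mul0r. Qed.
Lemma thrM : thr M = V + 1.
Proof. by rewrite /thr ltnn. Qed.

Lemma partition (n : 'I_N) : \sum_(j < M) ind R (n \in Bj j) = 1.
Proof.
rewrite -(big_mkord xpredT (fun j => ind R (n \in Bj j))).
rewrite (telescope_sumr_eq (fun j => - ind R (thr j <= cum n))); last first.
  move=> k /andP [_ kM]; rewrite /Bj inE.
  have hm : thr k <= thr k.+1 by apply: thr_mono.
  rewrite /ind; case: (lerP (thr k) (cum n)) => h1; case: (lerP (thr k.+1) (cum n)) => h2 /=;
   try lra.
  by []. 
rewrite thrM thr0 /ind; have := cum_leV n; have := cum_ge0 n.
case: (lerP (V + 1) (cum n)); case: (lerP 0 (cum n)) => // =>*; lra.
Qed.

Definition TT a := \sum_n (if cum n < a then vv q n else 0).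
Lemma TTE a : TT a = Tn N a.
Proof. by rewrite /TT /Tn; apply: eq_bigr => n _; rewrite vnE. Qed.

Lemma Vblock j : (j < M)%N -> V / M%:R - 1/4 <= \sum_(n in Bj j) vv q n.
Proof.
move=> jM.
have e : \sum_(n in Bj j) vv q n = TT (thr j.+1) - TT (thr j).
  rewrite big_mkcond /TT -sumrB; apply: eq_bigr => n _; rewrite /Bj inE.
  have hm : thr j <= thr j.+1 by apply: thr_mono.
  case: (lerP (thr j) (cum n)) => h1; case: (ltrP (cum n) (thr j.+1)) => h2 /=;
   rewrite ?subr0 ?subrr //; try lra.
rewrite e.
have h1 : j.+1%:R * V / M%:R <= TT (thr j.+1).
  rewrite TTE; case: (ltnP j.+1 M) => jM'.
    have hl := thr_le_V jM'; have := @Tn_low N (thr j.+1) hl; by rewrite /thr jM'.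
  have ejM : j.+1 = M by apply/eqP; rewrite eqn_leq jM jM'.
  rewrite Tn_eq; last by rewrite -/V ejM thrM; lra.
  rewrite -/V ejM mulrC mulrA mulVf ?mul1r //; have := Mpos; lra.
have h2 : TT (thr j) <= j%:R * V / M%:R + 1/4.
  by rewrite TTE; have := Tn_up N (thr_ge0 j); rewrite /thr jM.
have -> : V / M%:R = j.+1%:R * V / M%:R - j%:R * V / M%:R.
  by rewrite -mulrBl -mulrBl -natrB // subSnn mul1r.
lra.
Qed.

End Cum.


Section Blocks.
Variable R : realType.
Variable N : nat.
Variable q : 'I_N -> R.
Hypothesis q01 : forall n, 0 <= q n <= 1.
Variable M : nat.
Hypothesis M0 : (0 < M)%N.
Local Notation FT := {ffun 'I_N -> bool}.
Local Notation E := (Ex (pw q)).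
Local Notation Bj := (Bj q M).

Definition Dall (x : FT) := \sum_n dv q n x.
Definition Dj j (x : FT) := \sum_(n in Bj j) dv q n x.

Lemma sum_blocks x : \sum_(j < M) Dj j x = Dall x.
Proof.
rewrite /Dj /Dall.
under eq_bigr do rewrite big_mkcond /=.
rewrite exchange_big /=; apply: eq_bigr => n _.
rewrite (eq_bigr (fun j : 'I_M => ind R (n \in Bj j) * dv q n x)); last first.
  by move=> j _; rewrite /ind; case: ifP => _; rewrite ?mul1r ?mul0r.
by rewrite -big_distrl /= partition // mul1r.
Qed.

Variables (sg yb : R).
Hypothesis sg2 : sg ^+ 2 = 1.
Hypothesis yb0 : 0 <= yb.
Let V := cumn q N.
Hypothesis hV1 : 1 + 1/4 <= V / M%:R.
Hypothesis hV2 : 256 * yb ^+ 2 + 1/4 <= V / M%:R.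

Definition Ev j (x : FT) := ind R (sg * Dj j x < - yb).

Lemma Ev_prob j : (j < M)%N -> 1/256 <= E (Ev j).
Proof.
move=> jM; have hVj := Vblock q01 M0 jM.
set Vj := \sum_(n in Bj j) vv q n in hVj.
have [h1 h2 h4] := moments q01 (enum_uniq (pred_of_set (Bj j))).
have eV : \sum_(n <- enum (Bj j)) vv q n = Vj by rewrite big_enum.
have eD : forall x, \sum_(n <- enum (Bj j)) dv q n x = Dj j x by move=> x; rewrite /Dj big_enum.
rewrite eV (eq_Ex _ eD) in h1 h2 h4.
rewrite (eq_Ex _ (G := fun x => Dj j x ^+ 2)) in h2; last by move=> x; rewrite eD.
rewrite (eq_Ex _ (G := fun x => Dj j x ^+ 4)) in h4; last by move=> x; rewrite eD.
rewrite -/V in hVj.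
have Vj1 : 1 <= Vj by move: hVj hV1; generalize (V / M%:R) => r; lra.
apply: (tail2 (pw0 q01) (pw1 q) (Z := fun x => sg * Dj j x) (V := Vj)).
- by rewrite ExZ h1 mulr0.
- rewrite (eq_Ex _ (G := fun x => sg ^+ 2 * Dj j x ^+ 2)); last by move=> x; rewrite exprMn.
  by rewrite ExZ sg2 mul1r.
- rewrite (eq_Ex _ (G := fun x => (sg ^+ 2) ^+ 2 * Dj j x ^+ 4)); last first.
    by move=> x; rewrite exprMn -exprM.
  rewrite ExZ sg2 expr1n mul1r; apply: le_trans h4 _.
  have : Vj <= Vj ^+ 2 by rewrite expr2 ler_peMl //; lra.
  lra.
- lra.
- done.
- by move: hVj hV2; generalize (V / M%:R) => r; lra.
Qed.


Lemma dep_prod (A : {set 'I_N}) J (F : nat -> FT -> R) :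
  (forall j, (j < J)%N -> dep A (F j)) -> dep A (fun x => \prod_(j < J) F j x).
Proof. by move=> h x y e; apply: eq_bigr => j _; apply: (h j (ltn_ord j)). Qed.

Lemma dep_Ev j : dep (Bj j) (Ev j).
Proof.
move=> x y e; rewrite /Ev /Dj; congr (ind R (sg * _ < _)).
by apply: eq_bigr => n nB; rewrite /dv e.
Qed.

Lemma prod_ev J : (J <= M)%N -> (1/256) ^+ J <= E (fun x => \prod_(j < J) Ev j x).
Proof.
elim: J => [|J IH] JM.
  rewrite (eq_Ex _ (G := fun _ => 1)); last by move=> x; rewrite big_ord0.
  by rewrite Ex_cst ?expr0 //; exact: pw1.
have JM' : (J <= M)%N by apply: ltnW.
rewrite (eq_Ex _ (G := fun x => (\prod_(j < J) Ev j x) * Ev J x)); last first.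
  by move=> x; rewrite big_ord_recr.
set A := [set n : 'I_N | cum q n < thr q M J].
have dG : dep (~: A) (Ev J).
  apply: (@dep_sub _ _ (Bj J)); last exact: dep_Ev.
  apply/fintype.subsetP => n; rewrite /Bj inE finset.in_setC inE.
  by case/andP => h _; rewrite -leNgt.
have dF : dep A (fun x => \prod_(j < J) Ev j x).
  apply: dep_prod => j jJ; apply: (@dep_sub _ _ (Bj j)); last exact: dep_Ev.
  apply/fintype.subsetP => n.
  rewrite /Bj !inE => /andP [_ h]; apply: lt_le_trans h _; apply: thr_mono => //.
rewrite (@indep _ _ q A _ _ dF dG).
rewrite exprS mulrC; apply: ler_pM.
- by apply: exprn_ge0; lra.
- by lra.
- exact: IH.
- exact: Ev_prob.
Qed.

Lemma block_anti : (1/256) ^+ M <= E (fun x => ind R (sg * Dall x < - (M%:R * yb))).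
Proof.
apply: le_trans (prod_ev (leqnn M)) _; apply: Ex_le; first exact: pw0.
move=> x; rewrite [X in _ <= X]/ind; case: ifP => ht.
  by apply: prodr_ile1 => j _; rewrite /Ev /ind; case: ifP => _; lra.
case: (boolP [exists j : 'I_M, ~~ (sg * Dj j x < - yb)]).
  case/existsP => j hj; rewrite (bigD1 j) //= /Ev /ind (negbTE hj) mul0r //.
rewrite negb_exists => /forallP hall.
have : sg * Dall x < - (M%:R * yb).
  rewrite -sum_blocks mulr_sumr.
  have -> : - (M%:R * yb) = \sum_(j < M) (- yb).
    by rewrite sumr_const card_ord mulNrn mulr_natl.
  apply: ltr_sum; first by apply/hasP; exists (Ordinal M0); rewrite ?mem_index_enum.
  by move=> j _; move: (hall j); rewrite negbK.
by rewrite ht.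
Qed.

End Blocks.


Section Link.
Variable R : realType.
Variables (PhL PhH : R).
Hypothesis hPhL : 0 <= PhL <= 1.
Hypothesis hPhH : 0 <= PhH <= 1.
Variable N : nat.
Variable Sig : 'I_N -> strategy R.
Hypothesis hSig : forall n, valid_strategy (Sig n).
Local Notation FT := {ffun 'I_N -> bool}.

Definition pst (w : state) := if w is H then PhH else PhL.
Definition qS (w : state) (n : 'I_N) : R := pst w * (Sig n).2 + (1 - pst w) * (Sig n).1.

Lemma pst01 w : 0 <= pst w <= 1.
Proof. by case: w. Qed.

Lemma qS01 w n : 0 <= qS w n <= 1.
Proof.
have /andP [p0 p1] := pst01 w.
have [/andP [a0 a1] /andP [b0 b1]] := hSig n.
rewrite /qS; set p := pst w in p0 p1 *.
have h1 : 0 <= p * (Sig n).2 by apply: mulr_ge0.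
have h2 : 0 <= (1 - p) * (Sig n).1 by apply: mulr_ge0; lra.
have h3 : p * (Sig n).2 <= p * 1 by apply: ler_wpM2l.
have h4 : (1 - p) * (Sig n).1 <= (1 - p) * 1 by apply: ler_wpM2l; lra.
apply/andP; split; lra.
Qed.

Lemma condE_pw w (F : FT -> R) : condE PhL PhH w Sig F = Ex (pw (qS w)) F.
Proof.
rewrite /condE exchange_big /=; apply: eq_bigr => x _.
rewrite -big_distrl /=; congr (_ * _).
rewrite /jprob.
rewrite -(bigA_distr_bigA (fun n b => psig PhL PhH w b * pvote (Sig n) b (x n))) /=.
apply: eq_bigr => n _; rewrite big_bool /psig /pvote /bw /qS /pst.
by case: w; case: (x n) => /=; ring.
Qed.

Lemma nA_sum (x : FT) : nA R x = \sum_n ind R (x n).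
Proof.
rewrite /nA -sum1_card natr_sum big_mkcond /=; apply: eq_bigr => n _.
by rewrite inE /ind; case: (x n).
Qed.

Lemma Xn_ind n (x : FT) : Xn R n x = ind R (x n).
Proof. by rewrite /Xn /ind; case: (x n). Qed.

End Link.


Section PerN.
Variable R : realType.
Variables (mu PL PH PhL PhH : R).
Hypothesis hmu : 0 < mu < 1.
Hypothesis hPL : 0 < PL.
Hypothesis hPH : 0 < PH.
Hypothesis hP : PL + PH = 1.
Hypothesis hPhL : 0 <= PhL <= 1.
Hypothesis hPhH : 0 <= PhH <= 1.
Variable N : nat.
Variable Sig : 'I_N -> strategy R.
Hypothesis hSig : forall n, valid_strategy (Sig n).
Local Notation FT := {ffun 'I_N -> bool}.
Local Notation q w := (qS PhL PhH Sig w).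
Local Notation E w := (Ex (pw (q w))).

Lemma q01 w n : 0 <= q w n <= 1.
Proof. exact: qS01. Qed.

Definition mm w := \sum_n q w n.
Definition VV w := cumn (q w) N.

Lemma Eind w n : E w (fun x => ind R (x n)) = q w n.
Proof. by rewrite (Ex1 (q w) n (fun b => ind R b)) /ind; ring. Qed.

Lemma EnA w : E w (@nA R N) = mm w.
Proof.
rewrite (eq_Ex _ (@nA_sum R N)) Ex_sum; apply: eq_bigr => n _; exact: Eind.
Qed.

Lemma Dall_eq w x : Dall (q w) x = nA R x - mm w.
Proof. by rewrite /Dall nA_sum /mm -sumrB. Qed.

Lemma mom_all w : E w (Dall (q w)) = 0 /\ E w (fun x => Dall (q w) x ^+ 2) = VV w.
Proof.
have [h1 h2 _] := moments (q01 w) (index_enum_uniq 'I_N).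
by split; [exact: h1 | rewrite h2 /VV -Vtot].
Qed.

Lemma VV_le w : VV w <= N%:R / 4.
Proof.
rewrite /VV -Vtot; apply: le_trans (ler_sum _ (fun n _ => vv_le (q w) n)) _.
by rewrite sumr_const card_ord -mulr_natl; lra.
Qed.

Lemma VV_ge0 w : 0 <= VV w.
Proof. by rewrite /VV -Vtot; apply: sumr_ge0 => n _; apply: vv_ge0; apply: q01. Qed.

Lemma condVar_eq w : condVar PhL PhH w Sig = VV w.
Proof.
rewrite /condVar !condE_pw //.
have [h1 h2] := mom_all w.
rewrite EnA (eq_Ex _ (G := fun x : FT => Dall (q w) x ^+ 2 + (2 * mm w) * Dall (q w) x + mm w ^+ 2));
  last by move=> x; rewrite Dall_eq; ring.
by rewrite !ExD ExZ h1 h2 Ex_cst ?pw1 //; ring.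
Qed.

Lemma fH_eq : fH mu PhL PhH Sig = N%:R^-1 * mm H - mu.
Proof.
rewrite /fH; congr (_ * _ - _); apply: eq_bigr => n _.
by rewrite condE_pw // (eq_Ex _ (@Xn_ind R N n)) Eind.
Qed.

Lemma fL_eq : (0 < N)%N -> fL mu PhL PhH Sig = mu - N%:R^-1 * mm L.
Proof.
move=> N0; rewrite /fL.
have -> : \sum_(n < N) condE PhL PhH L Sig (fun x => 1 - Xn R n x) = N%:R - mm L.
  have -> : N%:R = \sum_(n < N) (1 : R) by rewrite sumr_const card_ord.
  rewrite /mm -sumrB; apply: eq_bigr => n _.
  rewrite condE_pw // (eq_Ex _ (G := fun x : FT => 1 - ind R (x n))); last by move=> x; rewrite Xn_ind.
  by rewrite ExB Ex_cst ?pw1 // Eind.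
rewrite mulrBr mulVf ?pnatr_eq0 -?lt0n //; ring.
Qed.

Definition lamA w := E w (fun x => ind R (Awins mu x)).

Lemma fid_eq : fidelity mu PL PH PhL PhH Sig = PL * (1 - lamA L) + PH * lamA H.
Proof.
rewrite /fidelity /lambdaR /lambdaA !condE_pw //; congr (PL * _ + PH * _).
  rewrite /lamA -Ex_indC ?pw1 //; apply: eq_Ex => x; rewrite /ind; by case: Awins.
Qed.

Lemma lamA01 w : 0 <= lamA w <= 1.
Proof. have w0 := pw0 (q01 w); have w1 := pw1 (q w); by rewrite /lamA (Ex_ind_ge0 w0) (Ex_ind_le1 w0 w1). Qed.

Lemma fid_le1 : fidelity mu PL PH PhL PhH Sig <= 1.
Proof.
rewrite fid_eq; have /andP [a0 a1] := lamA01 L; have /andP [b0 b1] := lamA01 H.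
have h1 : PL * (1 - lamA L) <= PL * 1. apply: ler_wpM2l. exact: ltW hPL. lra.
have h2 : PH * lamA H <= PH * 1 by apply: ler_wpM2l; [exact: ltW hPH | lra].
rewrite !mulr1 in h1 h2; have := hP; lra.
Qed.


Lemma cheb w (P : FT -> bool) (Z : FT -> R) x : 0 < x ->
  (forall t, P t -> x ^+ 2 <= Z t ^+ 2) ->
  E w (fun t => ind R (P t)) <= E w (fun t => Z t ^+ 2) / x ^+ 2.
Proof.
move=> x0 h; have x2 : 0 < x ^+ 2 by apply: exprn_gt0.
rewrite mulrC -ExZ; apply: (Ex_le (pw0 (q01 w))) => t; rewrite /ind.
case: ifP => Pt.
  by rewrite mulrC ler_pdivlMr // mul1r; apply: h.
by apply: mulr_ge0; [rewrite invr_ge0; apply: ltW | apply: sqr_ge0].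
Qed.

Lemma mmH_eq : (0 < N)%N -> mm H = N%:R * (fH mu PhL PhH Sig + mu).
Proof. by move=> N0; rewrite fH_eq subrK mulrA mulfV ?mul1r // pnatr_eq0 -lt0n. Qed.
Lemma mmL_eq : (0 < N)%N -> mm L = N%:R * (mu - fL mu PhL PhH Sig).
Proof. by move=> N0; rewrite fL_eq // opprB addrCA subrr addr0 mulrA mulfV ?mul1r // pnatr_eq0 -lt0n. Qed.

Lemma sqr_le_ab (a b : R) : 0 <= a -> a <= b -> a ^+ 2 <= b ^+ 2.
Proof. by move=> a0 ab; rewrite !expr2; apply: ler_pM. Qed.

Local Notation f := (fexcess mu PhL PhH Sig).
Lemma f_leH : f <= fH mu PhL PhH Sig. Proof. by rewrite /fexcess ge_min lexx. Qed.
Lemma f_leL : f <= fL mu PhL PhH Sig. Proof. by rewrite /fexcess ge_min lexx orbT. Qed.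

Lemma fid_lower : (0 < N)%N -> 0 < f ->
  1 - (N%:R / 4) / (N%:R * f) ^+ 2 <= fidelity mu PL PH PhL PhH Sig.
Proof.
move=> N0 f0; have Npos : 0 < N%:R :> R by rewrite ltr0n.
have Nf : 0 < N%:R * f by apply: mulr_gt0.
set eps := (N%:R / 4) / (N%:R * f) ^+ 2.
have hH : E H (fun t => ind R (~~ Awins mu t)) <= eps.
  have [_ h2] := mom_all H.
  apply: le_trans (@cheb H (fun t => ~~ Awins mu t) (Dall (q H)) _ Nf _) _.
    move=> t; rewrite /Awins -ltNge Dall_eq mmH_eq // => hlt.
    rewrite -[X in _ <= X]sqrrN; apply: sqr_le_ab; first exact: ltW Nf.
    have hf := f_leH; move: hlt hf Nf; rewrite mulrDr [mu * _]mulrC.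
    generalize (fH mu PhL PhH Sig) => F; set g := fexcess _ _ _ _ => hlt hf Nf'.
    have : N%:R * g <= N%:R * F by apply: ler_wpM2l; [exact: ltW Npos | exact: hf].
    lra.
  by rewrite h2 /eps ler_wpM2r ?invr_ge0 ?sqr_ge0 // VV_le.
have hL : E L (fun t => ind R (Awins mu t)) <= eps.
  have [_ h2] := mom_all L.
  apply: le_trans (@cheb L (fun t => Awins mu t) (Dall (q L)) _ Nf _) _.
    move=> t; rewrite /Awins Dall_eq mmL_eq // => hle.
    apply: sqr_le_ab; first exact: ltW Nf.
    have hf := f_leL; move: hle hf Nf; rewrite mulrBr [mu * _]mulrC.
    generalize (fL mu PhL PhH Sig) => F; set g := fexcess _ _ _ _ => hle hf Nf'.
    have : N%:R * g <= N%:R * F by apply: ler_wpM2l; [exact: ltW Npos | exact: hf].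
    lra.
  by rewrite h2 /eps ler_wpM2r ?invr_ge0 ?sqr_ge0 // VV_le.
rewrite fid_eq.
have eH : lamA H = 1 - E H (fun t => ind R (~~ Awins mu t)) by rewrite Ex_indC ?pw1 // opprB addrCA subrr addr0.
rewrite eH /lamA.
have h1 : PL * (1 - eps) <= PL * (1 - E L (fun x => ind R (Awins mu x))) by apply: ler_wpM2l; [exact: ltW hPL | lra].
have h2 : PH * (1 - eps) <= PH * (1 - E H (fun t => ind R (~~ Awins mu t))) by apply: ler_wpM2l; [exact: ltW hPH | lra].
have e3 : PL * eps + PH * eps = eps by rewrite -mulrDl hP mul1r.
have := hP; move: h1 h2; rewrite !mulrBr !mulr1; lra.
Qed.


Lemma delta_bound (a p : R) : 0 <= p -> a ^+ 2 * (1 - p) ^+ 2 <= p / 4 ->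
  Num.min (1/2) (a ^+ 2) <= p.
Proof.
move=> p0 h; case: (lerP (1/2) p) => hp; first by rewrite ge_min hp.
rewrite ge_min; apply/orP; right.
have h1 : 1/4 <= (1 - p) ^+ 2 by rewrite expr2; nra.
have h2 : a ^+ 2 * (1/4) <= a ^+ 2 * (1 - p) ^+ 2 by apply: ler_wpM2l => //; apply: sqr_ge0.
lra.
Qed.

Lemma Ex_ind_le w (P Q : FT -> bool) : (forall t, P t -> Q t) ->
  E w (fun t => ind R (P t)) <= E w (fun t => ind R (Q t)).
Proof.
move=> h; apply: (Ex_le (pw0 (q01 w))) => t; rewrite /ind.
by case: ifP => Pt; [rewrite h | case: ifP].
Qed.

Lemma fid_upper2 (a : R) : (0 < N)%N -> a < 0 -> Num.sqrt N%:R * f < a ->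
  fidelity mu PL PH PhL PhH Sig <= 1 - Num.min PL PH * Num.min (1/2) (a ^+ 2).
Proof.
move=> N0 a0 hf.
have Npos : 0 < N%:R :> R by rewrite ltr0n.
set s := Num.sqrt (N%:R : R).
have s0 : 0 < s by rewrite sqrtr_gt0.
have ss : s ^+ 2 = N%:R by rewrite sqr_sqrtr // ltW.
set x := - a * s.
have x0 : 0 < x by rewrite /x mulr_gt0 // oppr_gt0.
set d := Num.min (1/2) (a ^+ 2).
have d0 : 0 <= d by rewrite /d le_min; apply/andP; split; [lra | apply: sqr_ge0].
have keyd : forall w Z, E w Z = 0 -> E w (fun t => Z t ^+ 2) <= N%:R / 4 ->
    d <= E w (fun t => ind R (Z t < x)).
  move=> w Z h1 h2.
  have := tail1 (pw0 (q01 w)) (pw1 (q w)) h1 h2 x0.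
  set p := E w _ => ht.
  apply: delta_bound; first by apply: Ex_ind_ge0; exact: pw0 (q01 w).
  have e : x ^+ 2 = a ^+ 2 * N%:R by rewrite /x exprMn sqrrN ss.
  rewrite e in ht.
  have : N%:R * (a ^+ 2 * (1 - p) ^+ 2) <= N%:R * (p / 4).
    have e1 : N%:R * (a ^+ 2 * (1 - p) ^+ 2) = a ^+ 2 * N%:R * (1 - p) ^+ 2 by ring.
    have e2 : N%:R * (p / 4) = N%:R / 4 * p by ring.
    by rewrite e1 e2.
  by rewrite ler_pM2l.
have /andP [lL0 lL1] := lamA01 L; have /andP [lH0 lH1] := lamA01 H.
have mP : Num.min PL PH <= PL by rewrite ge_min lexx.
have mH : Num.min PL PH <= PH by rewrite ge_min lexx orbT.
rewrite fid_eq.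
have [hm|hm] : s * fH mu PhL PhH Sig < a \/ s * fL mu PhL PhH Sig < a.
  move: hf; rewrite /fexcess; case: (leP (fH mu PhL PhH Sig) (fL mu PhL PhH Sig)) => h.
    by move=> ?; left.
  by move=> ?; right.
- have [h1 h2] := mom_all H.
  have hd := keyd H (Dall (q H)) h1 (ltac:(by rewrite h2; exact: VV_le)).
  have hl : lamA H <= 1 - E H (fun t => ind R (Dall (q H) t < x)).
    rewrite -Ex_indC ?pw1 //; apply: Ex_ind_le => t; rewrite /Awins -leNgt Dall_eq mmH_eq //.
    have h3 : N%:R * fH mu PhL PhH Sig < - x.
      have : s * (s * fH mu PhL PhH Sig) < s * a by rewrite ltr_pM2l.
      by rewrite mulrA -expr2 ss /x mulNr opprK [a * s]mulrC.
    move=> h4; move: h3 h4; generalize (fH mu PhL PhH Sig) => F.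
    rewrite mulrDr [mu * _]mulrC; lra.
  have : PH * lamA H <= PH * (1 - d) by apply: ler_wpM2l; [exact: ltW hPH | lra].
  have : PL * (1 - lamA L) <= PL by rewrite -[X in _ <= X]mulr1; apply: ler_wpM2l; [exact: ltW hPL | lra].
  have : Num.min PL PH * d <= PH * d by apply: ler_wpM2r.
  have := hP; lra.
- have [h1 h2] := mom_all L.
  have h1' : E L (fun t => - Dall (q L) t) = 0 by rewrite ExN h1 oppr0.
  have h2' : E L (fun t => (- Dall (q L) t) ^+ 2) <= N%:R / 4.
    by rewrite (eq_Ex _ (G := fun t => Dall (q L) t ^+ 2)) ?h2 ?VV_le // => t; rewrite sqrrN.
  have hd := keyd L _ h1' h2'.
  have hl : 1 - lamA L <= 1 - E L (fun t => ind R (- Dall (q L) t < x)).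
    rewrite /lamA -!Ex_indC ?pw1 //; apply: Ex_ind_le => t; rewrite /Awins -ltNge Dall_eq mmL_eq //.
    have h3 : N%:R * fL mu PhL PhH Sig < - x.
      have : s * (s * fL mu PhL PhH Sig) < s * a by rewrite ltr_pM2l.
      by rewrite mulrA -expr2 ss /x mulNr opprK [a * s]mulrC.
    move=> h4; move: h3 h4; generalize (fL mu PhL PhH Sig) => F.
    rewrite mulrBr [mu * _]mulrC; lra.
  have : PL * (1 - lamA L) <= PL * (1 - d) by apply: ler_wpM2l; [exact: ltW hPL | lra].
  have : PH * lamA H <= PH by rewrite -[X in _ <= X]mulr1; apply: ler_wpM2l; [exact: ltW hPH | lra].
  have : Num.min PL PH * d <= PL * d by apply: ler_wpM2r.
  have := hP; lra.
Qed.


Lemma fid_upper3 (M : nat) (K psi : R) : (0 < N)%N -> (0 < M)%N -> 0 < K -> 0 < psi ->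
  512 * K ^+ 2 <= psi * M%:R -> 4 * M%:R <= psi * N%:R ->
  (forall w, psi * N%:R <= VV w) ->
  Num.sqrt (N%:R : R) * f < K ->
  fidelity mu PL PH PhL PhH Sig <= 1 - Num.min PL PH * (1/256) ^+ M.
Proof.
move=> N0 M0 K0 psi0 hM hN hV hf.
have Npos : 0 < N%:R :> R by rewrite ltr0n.
have Mpos : 0 < M%:R :> R by rewrite ltr0n.
set s := Num.sqrt (N%:R : R).
have s0 : 0 < s by rewrite sqrtr_gt0.
have ss : s ^+ 2 = N%:R by rewrite sqr_sqrtr // ltW.
set yb := K * s / M%:R.
have yb0 : 0 <= yb by apply: divr_ge0; [apply: mulr_ge0; apply: ltW | apply: ltW].
have Myb : M%:R * yb = K * s by rewrite /yb mulrC divfK // gt_eqF.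
have cond : forall w, 1 + 1/4 <= cumn (q w) N / M%:R /\ 256 * yb ^+ 2 + 1/4 <= cumn (q w) N / M%:R.
  move=> w; have := hV w; rewrite /VV => hVw.
  have h1 : psi * N%:R / M%:R <= cumn (q w) N / M%:R by rewrite ler_pM2r ?invr_gt0.
  have h2 : 4 <= psi * N%:R / M%:R by rewrite ler_pdivlMr // mulrC.
  have h3 : 256 * yb ^+ 2 <= psi * N%:R / M%:R / 2.
    rewrite /yb !exprMn ss.
    set u := M%:R^-1.
    have hu : M%:R * u = 1 by rewrite /u mulfV // gt_eqF.
    have u2 : 0 <= N%:R * u ^+ 2 by apply: mulr_ge0; [apply: ltW | apply: sqr_ge0].
    have h5 : 512 * K ^+ 2 * (N%:R * u ^+ 2) <= psi * M%:R * (N%:R * u ^+ 2) by apply: ler_wpM2r.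
    have e1 : 256 * (K ^+ 2 * N%:R * u ^+ 2) = 512 * K ^+ 2 * (N%:R * u ^+ 2) / 2 by field.
    have e2 : psi * M%:R * (N%:R * u ^+ 2) / 2 = psi * N%:R * u * (M%:R * u) / 2 by ring.
    rewrite hu mulr1 in e2.
    rewrite e1 -e2; lra.
  split; lra.
have /andP [lL0 lL1] := lamA01 L; have /andP [lH0 lH1] := lamA01 H.
have mP : Num.min PL PH <= PL by rewrite ge_min lexx.
have mH : Num.min PL PH <= PH by rewrite ge_min lexx orbT.
set d := (1/256 : R) ^+ M.
have d0 : 0 <= d by apply: exprn_ge0; lra.
rewrite fid_eq.
have [hm|hm] : s * fH mu PhL PhH Sig < K \/ s * fL mu PhL PhH Sig < K.
  move: hf; rewrite /fexcess; case: (leP (fH mu PhL PhH Sig) (fL mu PhL PhH Sig)) => h.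
    by move=> ?; left.
  by move=> ?; right.
- have [c1 c2] := cond H.
  have hb := block_anti (q01 H) M0 (sg := 1) (expr1n _ 2) yb0 c1 c2.
  have hl : d <= 1 - lamA H.
    apply: le_trans hb _; rewrite /lamA -Ex_indC ?pw1 //; apply: Ex_ind_le => t.
    rewrite mul1r Myb Dall_eq /Awins -ltNge mmH_eq //.
    have h3 : N%:R * fH mu PhL PhH Sig < K * s.
      have : s * (s * fH mu PhL PhH Sig) < s * K by rewrite ltr_pM2l.
      by rewrite mulrA -expr2 ss [K * s]mulrC.
    move=> h4; move: h3 h4; generalize (fH mu PhL PhH Sig) => F.
    rewrite mulrDr [mu * _]mulrC; lra.
  have : PH * lamA H <= PH * (1 - d) by apply: ler_wpM2l; [exact: ltW hPH | lra].
  have : PL * (1 - lamA L) <= PL by rewrite -[X in _ <= X]mulr1; apply: ler_wpM2l; [exact: ltW hPL | lra].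
  have : Num.min PL PH * d <= PH * d by apply: ler_wpM2r.
  have := hP; lra.
- have [c1 c2] := cond L.
  have sg2 : (-1 : R) ^+ 2 = 1 by rewrite sqrrN expr1n.
  have hb := block_anti (q01 L) M0 (sg := -1) sg2 yb0 c1 c2.
  have hl : d <= lamA L.
    apply: le_trans hb _; rewrite /lamA; apply: Ex_ind_le => t.
    rewrite mulN1r Myb Dall_eq /Awins mmL_eq //.
    have h3 : N%:R * fL mu PhL PhH Sig < K * s.
      have : s * (s * fL mu PhL PhH Sig) < s * K by rewrite ltr_pM2l.
      by rewrite mulrA -expr2 ss [K * s]mulrC.
    move=> h4; move: h3 h4; generalize (fL mu PhL PhH Sig) => F.
    rewrite mulrBr [mu * _]mulrC => h3 h4; apply: ltW; lra.
  have : PL * (1 - lamA L) <= PL * (1 - d) by apply: ler_wpM2l; [exact: ltW hPL | lra].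
  have : PH * lamA H <= PH by rewrite -[X in _ <= X]mulr1; apply: ler_wpM2l; [exact: ltW hPH | lra].
  have : Num.min PL PH * d <= PL * d by apply: ler_wpM2r.
  have := hP; lra.
Qed.

End PerN.


Unset Implicit Arguments.
Import numFieldNormedType.Exports.
Local Open Scope classical_set_scope.
Local Open Scope ring_scope.

Section Lim.
Variable R : realType.

Lemma not_cvg1 (A : nat -> R) (c : R) : 0 < c ->
  (forall n, exists2 k, (n <= k)%N & A k <= 1 - c) -> ~ (A @ \oo --> (1 : R)).
Proof.
move=> c0 h /cvgrPdist_lt /(_ c c0) [n0 _ hn].
have [k kn hk] := h n0.
have := hn k kn; have := ler_norm (1 - A k); move=> h1 h2; lra.
Qed.

Lemma cvg1_of (A : nat -> R) : (forall e, 0 < e -> exists n0, forall k, (n0 <= k)%N -> `|1 - A k| < e) ->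
  A @ \oo --> (1 : R).
Proof.
move=> h; apply/cvgrPdist_lt => e e0; have [n0 hn] := h e e0.
by exists n0 => // k /= hk; apply: hn.
Qed.

Lemma einf_eq (g : nat -> \bar R) : limn_einf g = ereal_sup (range (einfs g)).
Proof. by rewrite limn_einf_lim; apply: cvg_lim => //; exact: cvg_einfs_sup. Qed.

Lemma liminf_lt (g : nat -> \bar R) (a : \bar R) : (limn_einf g < a)%E ->
  forall n, exists2 k, (n <= k)%N & (g k < a)%E.
Proof.
rewrite einf_eq => h n.
have h1 : (einfs g n < a)%E.
  apply: le_lt_trans h; apply: ereal_sup_ubound; by exists n.
move: h1; rewrite /einfs /= => /ereal_inf_lt [y [k /= nk <-] hk].
by exists k.
Qed.

Lemma liminf_infty (g : nat -> \bar R) : limn_einf g = +oo%E ->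
  forall M : R, exists n, forall k, (n <= k)%N -> (M%:E < g k)%E.
Proof.
rewrite einf_eq => h M.
have : (M%:E < ereal_sup (range (einfs g)))%E by rewrite h ltry.
move=> /ereal_sup_gt [y [n _ <-] hy]; exists n => k nk.
apply: lt_le_trans hy _; rewrite /einfs /=; apply: ereal_inf_lbound; by exists k.
Qed.

End Lim.


Theorem theorem4 (R : realType) (mu PL PH PhL PhH : R)
  (hmu : 0 < mu < 1) (hPL : 0 < PL) (hPH : 0 < PH) (hP : PL + PH = 1)
  (hPhL : 0 <= PhL <= 1) (hPhH : 0 <= PhH <= 1) (hsig : PhL < PhH)
  (Sig : forall N : nat, 'I_N -> strategy R)
  (hSig : forall N (n : 'I_N), valid_strategy (Sig N n)) :
  let g : nat -> \bar R :=
    fun N => (Num.sqrt (N%:R : R) * fexcess mu PhL PhH (Sig N))%:E in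
  let Afid : nat -> R := fun N => fidelity mu PL PH PhL PhH (Sig N) in
  [/\ limn_einf g = +oo%E -> Afid @ \oo --> (1 : R),
      (limn_einf g < 0)%E -> ~ (Afid @ \oo --> (1 : R)) &
      ((0 <= limn_einf g)%E /\ (limn_einf g < +oo)%E ->
       (exists2 psi : R, 0 < psi &
          forall N w, psi * N%:R <= condVar PhL PhH w (Sig N)) ->
       ~ (Afid @ \oo --> (1 : R)))].
Proof.
move=> g Afid.
have kpos : forall (k : nat) (a : R), 0 <= a -> (Num.sqrt (k%:R : R) * fexcess mu PhL PhH (Sig k) > a)%R \/
    (Num.sqrt (k%:R : R) * fexcess mu PhL PhH (Sig k) < - a)%R -> (0 < k)%N.
  move=> k a a0 h; rewrite lt0n; apply/negP => /eqP k0; move: h; rewrite k0 sqrtr0 mul0r; lra.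
have mpos : 0 < Num.min PL PH by rewrite lt_min hPL hPH.
split.
- move=> hinf; apply: cvg1_of => e e0.
  have [n0 hn] := @liminf_infty R g hinf (e^-1 + 1).
  exists n0 => k hk; have := hn k hk; rewrite /g lte_fin => hG.
  have ei : 0 < e^-1 by rewrite invr_gt0.
  have k0 : (0 < k)%N by apply: (kpos k (e^-1 + 1)) => //; [lra | left].
  set s := Num.sqrt (k%:R : R) in hG.
  set f := fexcess mu PhL PhH (Sig k) in hG.
  have s0 : 0 < s by rewrite sqrtr_gt0 ltr0n.
  have ss : s ^+ 2 = k%:R by rewrite sqr_sqrtr // ler0n.
  have f0 : 0 < f by rewrite -(pmulr_rgt0 _ s0); lra.
  have hl := fid_lower hPL hPH hP hPhL hPhH (hSig k) k0 f0.
  have hu := fid_le1 mu hPL hPH hP hPhL hPhH (hSig k).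
  rewrite /Afid ger0_norm ?subr_ge0 //.
  have eG : (k%:R / 4) / (k%:R * f) ^+ 2 = 1 / (4 * (s * f) ^+ 2).
    rewrite !exprMn ss; field; apply/andP; split; rewrite gt_eqF //; rewrite ltr0n //.
  rewrite -/f in hl; rewrite eG in hl.
  set G := s * f in hG hl.
  have G1 : 1 < G by have := ei; lra.
  have eG1 : 1 < e * G.
    have : e * (e^-1 + 1) < e * G by rewrite ltr_pM2l.
    by rewrite mulrDr mulfV ?gt_eqF // mulr1; lra.
  have : 1 / (4 * G ^+ 2) < e.
    rewrite ltr_pdivrMr; last by apply: mulr_gt0; [lra | apply: exprn_gt0; lra].
    have : G <= G ^+ 2 by rewrite expr2 ler_peMl //; lra.
    move=> hGG; have : e * G <= e * G ^+ 2 by rewrite ler_pM2l.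
    nra.
  lra.
- move=> hlt.
  have [a a0 ha] : exists2 a : R, a < 0 & (limn_einf g < a%:E)%E.
    move: hlt; case: (limn_einf g) => [r| |] //=.
    + rewrite lte_fin => r0; exists (r / 2); [lra | rewrite lte_fin; lra].
    + by move=> _; exists (-1); [lra | rewrite ltNyr].
  apply: (@not_cvg1 R Afid (Num.min PL PH * Num.min (1/2) (a ^+ 2))).
    apply: mulr_gt0 => //; rewrite lt_min; apply/andP; split; first lra.
    by rewrite expr2; nra.
  move=> n; have [k kn hk] := @liminf_lt R g _ ha n; exists k => //.
  rewrite /g lte_fin in hk.
  have k0 : (0 < k)%N by apply: (kpos k (- a)) => //; [lra | right; rewrite opprK].
  rewrite /Afid; exact: (fid_upper2 hPL hPH hP hPhL hPhH (hSig k) k0 a0 hk).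
- move=> [h0 hfin] [psi psi0 hpsi].
  have [K K0 hK] : exists2 K : R, 0 < K & (limn_einf g < K%:E)%E.
    move: h0 hfin; case: (limn_einf g) => [r| |] //=.
    rewrite lee_fin => r0 _; exists (r + 1); [lra | rewrite lte_fin; lra].
  set M := (Num.bound (512 * K ^+ 2 / psi)).+1.
  have M0 : (0 < M)%N by [].
  have hM : 512 * K ^+ 2 <= psi * M%:R.
    have : 512 * K ^+ 2 / psi < (Num.bound (512 * K ^+ 2 / psi))%:R.
      by apply: archi_boundP; apply: divr_ge0; [apply: mulr_ge0; [lra | apply: sqr_ge0] | lra].
    rewrite ltr_pdivrMr // => h; apply: ltW; apply: lt_le_trans h _.
    rewrite [psi * _]mulrC; apply: ler_wpM2r; first lra.
    by rewrite ler_nat /M.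
  apply: (@not_cvg1 R Afid (Num.min PL PH * (1/256) ^+ M)).
    by apply: mulr_gt0 => //; apply: exprn_gt0; lra.
  move=> n.
  set B := Num.bound (4 * M%:R / psi).
  have [k kn hk] := @liminf_lt R g _ hK (maxn n B).
  exists k; first by apply: leq_trans kn; apply: leq_maxl.
  rewrite /g lte_fin in hk.
  have hB : 4 * M%:R / psi < B%:R.
    apply: archi_boundP; apply: divr_ge0; [apply: mulr_ge0; [lra | apply: ler0n] | lra].
  have hkB : (B <= k)%N by apply: leq_trans kn; apply: leq_maxr.
  have hBk : (B%:R : R) <= k%:R by rewrite ler_nat.
  have Mpos : 0 < M%:R :> R by rewrite ltr0n.
  have hN : 4 * M%:R <= psi * k%:R.
    have : 4 * M%:R / psi < k%:R by apply: lt_le_trans hBk.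
    by rewrite ltr_pdivrMr // [psi * _]mulrC => h; apply: ltW.
  have k0 : (0 < k)%N.
    rewrite -(ltr0n R); apply: lt_le_trans hBk; apply: le_lt_trans hB.
    by apply: divr_ge0; [apply: mulr_ge0; [lra | apply: ler0n] | lra].
  have hV : forall w, psi * k%:R <= VV PhL PhH (Sig k) w.
    by move=> w; rewrite -(condVar_eq hPhL hPhH (hSig k)); apply: hpsi.
  rewrite /Afid; exact: (fid_upper3 hPL hPH hP hPhL hPhH (hSig k) k0 M0 K0 psi0 hM hN hV hk).
Qed.
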